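(* Let $\mathbb K$ be a field with $2\in\mathbb K^\times$, $A$ a unital commutative associative $\mathbb K$-algebra, $\mathfrak k$ a $\mathbb K$-Lie algebra and $\mathfrak g=A\otimes\mathfrak k$. The map $$\Phi:\mathrm{Alt}^2(\mathfrak g/\mathfrak g')_{1,3}\oplus\mathrm{Lin}(A,H^2(\mathfrak k))\to H^2(\mathfrak g),\quad(\omega,\phi)\mapsto[\omega\circ(q\times q)]+[f_\phi],$$ is a well-defined injective linear map, and its image consists of the classes of those 2-cocycles $f=f_1\circ p_1+f_2\circ p_2+f_3\circ p_3$ for which $f_1\circ p_1$ vanishes on $\mathfrak g\times\mathfrak g'$.
   Context: $\mathfrak g$ has bracket $[a\otimes x,a'\otimes x']=aa'\otimes[x,x']$, $ax=a\otimes x$, unit $\mathbf 1$; $\mathfrak k'=[\mathfrak k,\mathfrak k]$, $\mathfrak g'=A\otimes\mathfrak k'$, $\mathfrak g/\mathfrak g'\cong A\otimes(\mathfrak k/\mathfrak k')$, $q:\mathfrak g\to\mathfrak g/\mathfrak g'$ the quotient map. $H^2(\mathfrak g)$: $\mathbb K$-valued 2-cocycles on $\mathfrak g$ modulo coboundaries $(u,v)\mapsto-\ell([u,v])$; $Z^2(\mathfrak k),H^2(\mathfrak k)$ similarly for $\mathfrak k$. Alternating bilinear forms on $\mathfrak g$ are identified with linear forms on $\Lambda^2(\mathfrak g)$ via $f(u,v)=f(u\wedge v)$, where $v\wedge w=\tfrac12(v\otimes w-w\otimes v)$ and $v\vee w=\tfrac12(v\otimes w+w\otimes v)$. $I_A$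 is the kernel of multiplication $S^2(A)\to A$; $p_1(ax\wedge by)=a\wedge b\otimes x\vee y$, $p_2(ax\wedge by)=ab\otimes x\wedge y$, $p_3(ax\wedge by)=(a\vee b-ab\vee\mathbf 1)\otimes x\wedge y$ give an isomorphism $\Lambda^2(\mathfrak g)\cong(\Lambda^2(A)\otimes S^2(\mathfrak k))\oplus(A\otimes\Lambda^2(\mathfrak k))\oplus(I_A\otimes\Lambda^2(\mathfrak k))$, so each linear $f$ on $\Lambda^2(\mathfrak g)$ is uniquely $f_1\circ p_1+f_2\circ p_2+f_3\circ p_3$. $\mathrm{Alt}^2(\mathfrak g/\mathfrak g')_{1,3}$ is the space of alternating bilinear forms $\omega$ on $\mathfrak g/\mathfrak g'$ with $\omega(a\bar x,\mathbf 1\bar y)+\omega(\mathbf 1\bar x,a\bar y)=0$ for all $a\in A$, $\bar x,\bar y\in\mathfrak k/\mathfrak k'$. For $\phi\in\mathrm{Lin}(A,H^2(\mathfrak k))$, $f_\phi(ax,by):=\tilde\phi(ab)(x,y)$, where $\tilde\phi:A\to Z^2(\mathfrak k)$ is any linear lift of $\phi$. *)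

(* Defs.v *)
From HB Require Import structures.
From mathcomp Require Import all_boot all_order all_algebra.
Set Implicit Arguments. Unset Strict Implicit. Unset Printing Implicit Defensive.
Import GRing.Theory.
Local Open Scope ring_scope.

Section Defs.
Variable K : fieldType.

Definition is_lin (V W : lmodType K) (L : V -> W) : Prop :=
  forall (c : K) (u v : V), L (c *: u + v) = c *: L u + L v.

Definition is_bilin (V W U : lmodType K) (b : V -> W -> U) : Prop :=
  (forall v, is_lin (b v)) /\ (forall w, is_lin (fun v => b v w)).

Definition bilin_form (V : lmodType K) (f : V -> V -> K) : Prop :=
  (forall c u1 u2 v, f (c *: u1 + u2) v = c * f u1 v + f u2 v) /\
  (forall c u v1 v2, f u (c *: v1 + v2) = c * f u v1 + f u v2).

Definition alt_form (V : lmodType K) (f : V -> V -> K) : Prop :=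
  bilin_form f /\ (forall u, f u u = 0).

Definition is_lie_bracket (L : lmodType K) (br : L -> L -> L) : Prop :=
  is_bilin br /\ (forall x, br x x = 0) /\
  (forall x y z, br x (br y z) + br y (br z x) + br z (br x y) = 0).

Definition cocycle2 (L : lmodType K) (br : L -> L -> L) (f : L -> L -> K) : Prop :=
  alt_form f /\
  (forall x y z, f (br x y) z + f (br y z) x + f (br z x) y = 0).

Definition coboundary2 (L : lmodType K) (br : L -> L -> L) (f : L -> L -> K) : Prop :=
  exists l : L -> K, is_lin (W := K^o) l /\ forall u v, f u v = - l (br u v).

Definition inspan (V : lmodType K) (S : V -> Prop) (v : V) : Prop :=
  exists (n : nat) (c : 'I_n -> K) (s : 'I_n -> V),
    (forall i, S (s i)) /\ v = \sum_(i < n) c i *: s i.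

Definition is_tensor (A k g : lmodType K) (t : A -> k -> g) : Prop :=
  is_bilin t /\
  forall (V : lmodType K) (beta : A -> k -> V), is_bilin beta ->
    exists L : g -> V, is_lin L /\ (forall a x, L (t a x) = beta a x) /\
      forall L' : g -> V, is_lin L' -> (forall a x, L' (t a x) = beta a x) ->
        forall u, L' u = L u.

Definition derived (k : lmodType K) (br : k -> k -> k) : k -> Prop :=
  inspan (fun z => exists x y, z = br x y).

Definition gprime (A k g : lmodType K) (t : A -> k -> g) (br : k -> k -> k) : g -> Prop :=
  inspan (fun u => exists a y, derived br y /\ u = t a y).

Definition is_quotient_map (g Q : lmodType K) (q : g -> Q) (S : g -> Prop) : Prop :=
  is_lin q /\ (forall w, exists u, q u = w) /\ (forall u, q u = 0 <-> S u).

Definition alt13 (A : comAlgType K) (k g Q : lmodType K) (t : A -> k -> g)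
  (q : g -> Q) (om : Q -> Q -> K) : Prop :=
  alt_form om /\
  forall (a : A) (x y : k), om (q (t a x)) (q (t 1 y)) + om (q (t 1 x)) (q (t a y)) = 0.

(* phi : A -> Z^2(k), a linear lift of an element of Lin(A, H^2(k)) *)
Definition Z2_lift (A : comAlgType K) (k : lmodType K) (br : k -> k -> k)
  (phi : A -> k -> k -> K) : Prop :=
  (forall c a b x y, phi (c *: a + b) x y = c * phi a x y + phi b x y) /\
  (forall a, cocycle2 br (phi a)).

Definition is_fphi (A : comAlgType K) (k g : lmodType K) (t : A -> k -> g)
  (phi : A -> k -> k -> K) (h : g -> g -> K) : Prop :=
  bilin_form h /\ forall a x b y, h (t a x) (t b y) = phi (a * b) x y.

(* representative of Phi(om, [phi]) : om o (q x q) + f_phi *)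
Definition Phi_rep (g Q : lmodType K) (q : g -> Q) (om : Q -> Q -> K)
  (h : g -> g -> K) : g -> g -> K :=
  fun u v => om (q u) (q v) + h u v.

(* f1 o p1 vanishes on g x g' :  f = h1 + h2 with h1 the component in
   Lambda^2(A) (x) S^2(k) (antisymmetric in A, symmetric in k) and h2 the
   component in S^2(A) (x) Lambda^2(k) ~ (A (x) Lambda^2 k) + (I_A (x) Lambda^2 k),
   i.e. h1 = f1 o p1 and h2 = f2 o p2 + f3 o p3. *)
Definition f1p1_vanishes (A : comAlgType K) (k g : lmodType K) (t : A -> k -> g)
  (br : k -> k -> k) (f : g -> g -> K) : Prop :=
  exists h1 h2 : g -> g -> K,
    bilin_form h1 /\ bilin_form h2 /\ (forall u v, f u v = h1 u v + h2 u v) /\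
    (forall a b x y, h1 (t a x) (t b y) = - h1 (t b x) (t a y)) /\
    (forall a b x y, h1 (t a x) (t b y) = h1 (t a y) (t b x)) /\
    (forall a b x y, h2 (t a x) (t b y) = h2 (t b x) (t a y)) /\
    (forall a b x y, h2 (t a x) (t b y) = - h2 (t a y) (t b x)) /\
    (forall u v, gprime t br v -> h1 u v = 0).

End Defs.

(* Main.v *)
Require Import Defs.
From HB Require Import structures.
From mathcomp Require Import all_boot all_order all_algebra.
From mathcomp Require classical_sets.
From Stdlib Require Import ClassicalEpsilon Classical.
From mathcomp Require Import ring.
Set Implicit Arguments. Unset Strict Implicit. Unset Printing Implicit Defensive.
Import GRing.Theory.
Local Open Scope ring_scope.
Section Gen.
Variable K : fieldType.

Lemma lin0 (V W : lmodType K) (L : V -> W) : is_lin L -> L 0 = 0.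
Proof.
move=> HL; have := HL 1 0 0; rewrite scaler0 addr0 scale1r => H.
have H2 : L 0 + 0 = L 0 + L 0 by rewrite addr0 {1}H.
by move/addrI: H2.
Qed.

Lemma linD (V W : lmodType K) (L : V -> W) : is_lin L -> forall u v, L (u + v) = L u + L v.
Proof. by move=> HL u v; have := HL 1 u v; rewrite !scale1r. Qed.

Lemma linZ (V W : lmodType K) (L : V -> W) : is_lin L -> forall c u, L (c *: u) = c *: L u.
Proof. by move=> HL c u; have := HL c u 0; rewrite !addr0 (lin0 HL) addr0. Qed.

Lemma linN (V W : lmodType K) (L : V -> W) : is_lin L -> forall u, L (- u) = - L u.
Proof. by move=> HL u; rewrite -scaleN1r (linZ HL) scaleN1r. Qed.

Lemma linB (V W : lmodType K) (L : V -> W) : is_lin L -> forall u v, L (u - v) = L u - L v.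
Proof. by move=> HL u v; rewrite (linD HL) (linN HL). Qed.

Lemma linS (V W : lmodType K) (L : V -> W) : is_lin L -> forall n (F : 'I_n -> V),
  L (\sum_(i < n) F i) = \sum_(i < n) L (F i).
Proof. by move=> HL n F; apply: (big_morph L (linD HL) (lin0 HL)). Qed.

Lemma proj_exists (V : lmodType K) (S : V -> Prop) : S 0 ->
  (forall c u v, S u -> S v -> S (c *: u + v)) ->
  exists pi : V -> V, is_lin pi /\ (forall v, S (pi v)) /\ (forall s, S s -> pi s = s).
Proof.
move=> S0 Scl.
pose P : classical_sets.set (classical_sets.set V) := fun C =>
  (forall c u v, C u -> C v -> C (c *: u + v)) /\ (forall x, C x -> S x -> x = 0).
have [C [[Ccl CS] Cmax]] : exists C, P C /\ forall B, classical_sets.proper C B -> ~ P B.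
  apply: classical_sets.Zorn_bigcup => F FP Ftot; split.
    move=> c u v [X FX Xu] [Y FY Yv].
    have [XY|YX] := Ftot X Y FX FY.
      by exists Y => //; apply: (FP Y FY).1 => //; apply: XY.
    by exists X => //; apply: (FP X FX).1 => //; apply: YX.
  by move=> x [X FX Xx] Sx; apply: (FP X FX).2.
pose C0 x := C x \/ x = 0.
have C0cl c u v : C0 u -> C0 v -> C0 (c *: u + v).
  case=> [Cu|->]; case=> [Cv|->].
  - by left; apply: Ccl.
  - left; rewrite addr0.
    have C00 : C 0 by have := Ccl (-1) u u Cu Cu; rewrite scaleN1r addNr.
    by have := Ccl c u 0 Cu C00; rewrite addr0.
  - by rewrite scaler0 add0r; left.
  - by right; rewrite scaler0 addr0.
have C0S x : C0 x -> S x -> x = 0 by case=> [Cx|->] //; apply: CS.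
have decomp v : exists sc : V * V, [/\ S sc.1, C0 sc.2 & v = sc.1 + sc.2].
  apply: NNPP => nd.
  pose C' x := exists a c, C0 c /\ x = c + a *: v.
  apply: (Cmax C'); last split.
  - split.
      by move=> x Cx; exists 0, x; split; [left|rewrite scale0r addr0].
    move=> H; apply: nd; exists (0, v); split => //=; last by rewrite add0r.
    by left; apply: H; exists 1, 0; split; [right|rewrite add0r scale1r].
  - move=> c u w [a1 [c1 [H1 ->]]] [a2 [c2 [H2 ->]]].
    exists (c * a1 + a2), (c *: c1 + c2); split; first exact: C0cl.
    by rewrite scalerDr scalerDl scalerA addrACA.
  - move=> x [a [c [Hc ->]]] Sx.
    move: Sx; have [->|a0] := eqVneq a 0 => Sx.
      by rewrite scale0r addr0 in Sx *; apply: C0S.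
    exfalso; apply: nd; exists (a^-1 *: (c + a *: v), (- a^-1) *: c + 0); split => /=.
    + by have := Scl a^-1 _ 0 Sx S0; rewrite addr0.
    + by apply: C0cl => //; right.
    + by rewrite addr0 scalerDr scalerA mulVf // scale1r scaleNr addrAC subrr add0r.
have uniq s1 c1 s2 c2 : S s1 -> C0 c1 -> S s2 -> C0 c2 -> s1 + c1 = s2 + c2 -> s1 = s2.
  move=> Ss1 Cc1 Ss2 Cc2 E; apply/eqP; rewrite -subr_eq0; apply/eqP.
  apply: C0S.
    have -> : s1 - s2 = (-1) *: c1 + c2.
      by rewrite scaleN1r -[s1](addrK c1) E addrAC [s2 + _]addrC addrK addrC.
    exact: C0cl.
  by have := Scl (-1) s2 s1 Ss2 Ss1; rewrite scaleN1r addrC.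
pose pi v := (proj1_sig (constructive_indefinite_description _ (decomp v))).1.
have piP v : [/\ S (pi v), C0 (v - pi v) & v = pi v + (v - pi v)].
  rewrite /pi; case: constructive_indefinite_description => [[s c] [/= Ss Cc ->]] /=.
  by rewrite addrAC subrr add0r.
exists pi; split; last split.
- move=> c u w.
  have [Su Cu Eu] := piP u; have [Sw Cw Ew] := piP w; have [Sx Cx Ex] := piP (c *: u + w).
  symmetry; apply: (uniq _ (c *: (u - pi u) + (w - pi w)) _ (c *: u + w - pi (c *: u + w))).
  + exact: Scl.
  + exact: C0cl.
  + exact Sx.
  + exact Cx.
  + by rewrite -Ex addrACA -scalerDr -Eu -Ew.
- by move=> v; have [] := piP v.
- move=> s Ss; have [Sx Cx Ex] := piP s.
  symmetry; apply: (uniq _ 0 _ (s - pi s) Ss _ Sx Cx); first by right.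
  by rewrite addr0 -Ex.
Qed.
End Gen.
Section Tensor.
Variables (K : fieldType) (A : comAlgType K) (k g : lmodType K) (t : A -> k -> g).
Hypothesis Ht : is_tensor t.

Lemma linK (V : lmodType K) (L : V -> K) : is_lin (W := K^o) L ->
  forall c u v, L (c *: u + v) = c * L u + L v.
Proof. by []. Qed.

Lemma tlin1 x : is_lin (fun a => t a x).
Proof. exact: Ht.1.2. Qed.
Lemma tlin2 a : is_lin (t a).
Proof. exact: Ht.1.1. Qed.

Lemma eq_pure (V : lmodType K) (L1 L2 : g -> V) : is_lin L1 -> is_lin L2 ->
  (forall a x, L1 (t a x) = L2 (t a x)) -> forall u, L1 u = L2 u.
Proof.
move=> H1 H2 E u; case: Ht => Hb Hu.
have [|L [HL [HLt Huniq]]] := Hu V (fun a x => L1 (t a x)).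
  split=> [a|x] c y z /=.
    by rewrite (tlin2 a) H1.
  by rewrite (tlin1 x) H1.
by rewrite (Huniq L1 H1 (fun a x => erefl)) (Huniq L2 H2) // => a x; rewrite E.
Qed.

Lemma formK (f : g -> g -> K) : bilin_form f -> 
  (forall v, is_lin (W := K^o) (fun u => f u v)) /\ (forall u, is_lin (W := K^o) (f u)).
Proof. by case=> H1 H2; split=> [v c u1 u2|u c v1 v2]; [apply: H1|apply: H2]. Qed.

Lemma bilin_ext (f1 f2 : g -> g -> K) : bilin_form f1 -> bilin_form f2 ->
  (forall a x b y, f1 (t a x) (t b y) = f2 (t a x) (t b y)) -> forall u v, f1 u v = f2 u v.
Proof.
move=> /formK [H11 H12] /formK [H21 H22] E.
have E1 a x v : f1 (t a x) v = f2 (t a x) v.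
  by apply: (eq_pure (H12 _) (H22 _)) => b y; apply: E.
by move=> u v; apply: (eq_pure (H11 v) (H21 v)) => a x; apply: E1.
Qed.

Lemma mk_form (B : A -> k -> A -> k -> K) :
  (forall c a a' x b y, B (c *: a + a') x b y = c * B a x b y + B a' x b y) ->
  (forall c a x x' b y, B a (c *: x + x') b y = c * B a x b y + B a x' b y) ->
  (forall c a x b b' y, B a x (c *: b + b') y = c * B a x b y + B a x b' y) ->
  (forall c a x b y y', B a x b (c *: y + y') = c * B a x b y + B a x b y') ->
  exists h : g -> g -> K, bilin_form h /\ forall a x b y, h (t a x) (t b y) = B a x b y.
Proof.
move=> Ba Bx Bb By.
have HF b y : exists L : g -> K, is_lin (W := K^o) L /\ (forall a x, L (t a x) = B a x b y).
  have [|L [HL [HLt _]]] := Ht.2 (K^o) (fun a x => B a x b y).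
    by split=> [a|x] c u v /=; [apply: Bx|apply: Ba].
  by exists L.
pose F b y := proj1_sig (constructive_indefinite_description _ (HF b y)).
have FP b y : is_lin (W := K^o) (F b y) /\ (forall a x, F b y (t a x) = B a x b y).
  by rewrite /F; case: constructive_indefinite_description.
have HG u : exists L : g -> K, is_lin (W := K^o) L /\ (forall b y, L (t b y) = F b y u).
  have [|L [HL [HLt _]]] := Ht.2 (K^o) (fun b y => F b y u).
    split=> [b|y] c v w /=.
      have := eq_pure (V := K^o) (L1 := fun u => F b (c *: v + w) u)
          (L2 := fun u => c * F b v u + F b w u).
      apply.
      - by move=> ? ? ?; apply: (FP _ _).1.
      - move=> c' u1 u2 /=; rewrite !(linK (FP _ _).1).
        by rewrite -[c' *: _]/(c' * _); ring.
      - by move=> a x /=; rewrite !(FP _ _).2.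
    have := eq_pure (V := K^o) (L1 := fun u => F (c *: v + w) y u)
        (L2 := fun u => c * F v y u + F w y u).
    apply.
    - by move=> ? ? ?; apply: (FP _ _).1.
    - move=> c' u1 u2 /=; rewrite !(linK (FP _ _).1).
      by rewrite -[c' *: _]/(c' * _); ring.
    - by move=> a x /=; rewrite !(FP _ _).2.
  by exists L.
pose G u := proj1_sig (constructive_indefinite_description _ (HG u)).
have GP u : is_lin (W := K^o) (G u) /\ (forall b y, G u (t b y) = F b y u).
  by rewrite /G; case: constructive_indefinite_description.
exists G; split; last by move=> a x b y; rewrite (GP _).2 (FP _ _).2.
split; last by move=> c u v1 v2; apply: (GP u).1.
move=> c u1 u2 v.
have := eq_pure (V := K^o) (L1 := G (c *: u1 + u2)) (L2 := fun v => c * G u1 v + G u2 v).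
apply.
- exact: (GP _).1.
- move=> c' v1 v2 /=; rewrite !(linK (GP _).1).
  by rewrite -[c' *: _]/(c' * _); ring.
- by move=> b y /=; rewrite !(GP _).2 (FP _ _).1.
Qed.

End Tensor.
Section Gen2.
Variable K : fieldType.
Implicit Types V W U : lmodType K.

Lemma half0 (x : K) : (2%:R : K) != 0 -> x + x = 0 -> x = 0.
Proof.
move=> H E; apply/eqP; move: E; rewrite -mulr2n -mulr_natl => /eqP.
by rewrite mulf_eq0 (negbTE H).
Qed.

Lemma lin_comp V W U (L1 : V -> W) (L2 : W -> U) : is_lin L1 -> is_lin L2 ->
  is_lin (fun v => L2 (L1 v)).
Proof. by move=> H1 H2 c u v; rewrite H1 H2. Qed.

Lemma lin_zero V W : is_lin (fun _ : V => (0 : W)).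
Proof. by move=> c u v; rewrite scaler0 addr0. Qed.

Lemma formK' V (f : V -> V -> K) : bilin_form f ->
  (forall v, is_lin (W := K^o) (fun u => f u v)) /\ (forall u, is_lin (W := K^o) (f u)).
Proof. by case=> H1 H2; split=> [v c u1 u2|u c v1 v2]; [apply: H1|apply: H2]. Qed.

Section BF.
Variables (V : lmodType K) (f : V -> V -> K).
Hypothesis Hf : bilin_form f.
Lemma bfD1 u1 u2 v : f (u1 + u2) v = f u1 v + f u2 v.
Proof. exact: (linD ((formK' Hf).1 v)). Qed.
Lemma bfD2 u v1 v2 : f u (v1 + v2) = f u v1 + f u v2.
Proof. exact: (linD ((formK' Hf).2 u)). Qed.
Lemma bfZ1 c u v : f (c *: u) v = c * f u v.
Proof. exact: (linZ ((formK' Hf).1 v)). Qed.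
Lemma bfZ2 c u v : f u (c *: v) = c * f u v.
Proof. exact: (linZ ((formK' Hf).2 u)). Qed.
Lemma bf01 v : f 0 v = 0.
Proof. exact: (lin0 ((formK' Hf).1 v)). Qed.
Lemma bf02 u : f u 0 = 0.
Proof. exact: (lin0 ((formK' Hf).2 u)). Qed.
Lemma bfN1 u v : f (- u) v = - f u v.
Proof. exact: (linN ((formK' Hf).1 v)). Qed.
Lemma bfN2 u v : f u (- v) = - f u v.
Proof. exact: (linN ((formK' Hf).2 u)). Qed.
Lemma bfB1 u1 u2 v : f (u1 - u2) v = f u1 v - f u2 v.
Proof. by rewrite bfD1 bfN1. Qed.
Lemma bfB2 u v1 v2 : f u (v1 - v2) = f u v1 - f u v2.
Proof. by rewrite bfD2 bfN2. Qed.
End BF.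

Lemma alt_skew V (f : V -> V -> K) : alt_form f -> forall u v, f u v = - f v u.
Proof.
case=> Hb H0 u v; have := H0 (u + v).
rewrite (bfD1 Hb) !(bfD2 Hb) !H0 add0r addr0 => /eqP.
by rewrite addr_eq0 => /eqP.
Qed.

Lemma skew_alt V (f : V -> V -> K) : (2%:R : K) != 0 -> (forall u v, f u v = - f v u) ->
  forall u, f u u = 0.
Proof. by move=> H2 Hs u; apply: half0 => //; rewrite {1}Hs addNr. Qed.

Lemma bf_comb V (f1 f2 : V -> V -> K) (c d : K) : bilin_form f1 -> bilin_form f2 ->
  bilin_form (fun u v => c * f1 u v + d * f2 u v).
Proof.
move=> [H11 H12] [H21 H22]; split=> e u1 u2 v.
  by rewrite H11 H21; ring.
by rewrite H12 H22; ring.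
Qed.

Lemma bf_linK V W (f : V -> V -> K) (L : W -> V) : bilin_form f -> is_lin L ->
  bilin_form (fun u v => f (L u) (L v)).
Proof. by move=> [H1 H2] HL; split=> c u1 u2 v; rewrite HL ?H1 ?H2. Qed.

End Gen2.
Section Main.
Variables (K : fieldType) (A : comAlgType K) (k : lmodType K) (brk : k -> k -> k)
  (g : lmodType K) (t : A -> k -> g) (brg : g -> g -> g) (Q : lmodType K) (q : g -> Q).
Hypothesis two_unit : (2%:R : K) != 0.
Hypothesis Hk : is_lie_bracket brk.
Hypothesis Ht : is_tensor t.
Hypothesis Hbrg_bil : is_bilin brg.
Hypothesis Hbrg : forall a x b y, brg (t a x) (t b y) = t (a * b) (brk x y).
Hypothesis Hq : is_quotient_map q (gprime t brk).

Lemma inspan1 (V : lmodType K) (S : V -> Prop) v : S v -> inspan S v.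
Proof.
move=> Sv; exists 1%N, (fun _ => 1), (fun _ => v); split=> //.
by rewrite big_ord1 scale1r.
Qed.

Lemma derived_br x y : derived brk (brk x y).
Proof. by apply: inspan1; exists x, y. Qed.

Lemma gprime_t a y : derived brk y -> gprime t brk (t a y).
Proof. by move=> Dy; apply: inspan1; exists a, y. Qed.

Lemma q_t a y : derived brk y -> q (t a y) = 0.
Proof. by move=> Dy; apply/(Hq.2.2 _).2/gprime_t. Qed.

Lemma qbr u v : q (brg u v) = 0.
Proof.
have H1 a x v' : q (brg (t a x) v') = 0.
  apply: (eq_pure Ht (L1 := fun v => q (brg (t a x) v)) (L2 := fun _ => 0)) v'.
  - exact: lin_comp (Hbrg_bil.1 _) Hq.1.
  - exact: lin_zero.
  - by move=> b y; rewrite Hbrg q_t //; apply: derived_br.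
apply: (eq_pure Ht (L1 := fun u => q (brg u v)) (L2 := fun _ => 0)) u.
- exact: lin_comp (Hbrg_bil.2 _) Hq.1.
- exact: lin_zero.
- by move=> a x; apply: H1.
Qed.

Lemma gprime_zero (f : g -> g -> K) : bilin_form f ->
  (forall u b y, derived brk y -> f u (t b y) = 0) ->
  forall u v, gprime t brk v -> f u v = 0.
Proof.
move=> Hf H u v [n [c [s [Hs ->]]]].
rewrite (linS ((formK' Hf).2 u)); apply: big1 => i _.
rewrite (linZ ((formK' Hf).2 u)).
have [a [y [Dy ->]]] := Hs i.
by rewrite H // scaler0.
Qed.

Lemma derived_ext (L1 L2 : k -> K) : is_lin (W := K^o) L1 -> is_lin (W := K^o) L2 ->
  (forall x y, L1 (brk x y) = L2 (brk x y)) -> forall w, derived brk w -> L1 w = L2 w.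
Proof.
move=> H1 H2 E w [n [c [s [Hs ->]]]].
rewrite (linS H1) (linS H2); apply: eq_bigr => i _.
rewrite (linZ H1) (linZ H2); have [x [y ->]] := Hs i.
by rewrite E.
Qed.


Lemma cocycle_pure (f : g -> g -> K) : bilin_form f ->
  (forall a x b y c z, f (brg (t a x) (t b y)) (t c z) + f (brg (t b y) (t c z)) (t a x)
      + f (brg (t c z) (t a x)) (t b y) = 0) ->
  forall u v w, f (brg u v) w + f (brg v w) u + f (brg w u) v = 0.
Proof.
move=> Hf Hp.
pose T u v w := f (brg u v) w + f (brg v w) u + f (brg w u) v.
have Tc u v w : T u v w = T v w u by rewrite /T; ring.
have TL u v : is_lin (W := K^o) (T u v).
  move=> c w1 w2; rewrite /T (Hbrg_bil.1 v).
  have -> := Hbrg_bil.2 u c w1 w2.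
  rewrite !(bfD1 Hf) (bfD2 Hf) !(bfZ1 Hf) (bfZ2 Hf) -[c *: _]/(c * _); ring.
have S1 a x b y w : T (t a x) (t b y) w = 0.
  apply: (eq_pure Ht (TL (t a x) (t b y)) (lin_zero (V:=g) K^o) _ w) => c z.
  exact: Hp.
have S2 a x v w : T (t a x) v w = 0.
  rewrite Tc Tc.
  apply: (eq_pure Ht (TL w (t a x)) (lin_zero (V:=g) K^o)) v.
  by move=> b y; rewrite Tc S1.
move=> u v w; rewrite -/(T u v w) Tc.
apply: (eq_pure Ht (TL v w) (lin_zero (V:=g) K^o)) u.
by move=> a x; rewrite -Tc S2.
Qed.

Lemma Z2_bf (phi : A -> k -> k -> K) : Z2_lift brk phi -> forall a, bilin_form (phi a).
Proof. by move=> H a; exact: (H.2 a).1.1. Qed.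

Lemma Z2_skew (phi : A -> k -> k -> K) : Z2_lift brk phi -> forall a x y, phi a x y = - phi a y x.
Proof. by move=> H a; apply: alt_skew; exact: (H.2 a).1. Qed.

Lemma fphi_skew (phi : A -> k -> k -> K) h : Z2_lift brk phi -> is_fphi t phi h -> forall u v, h u v = - h v u.
Proof.
move=> HZ [Hh Hp].
apply: (bilin_ext Ht Hh).
  by split=> c u1 u2 v; rewrite ?Hh.1 ?Hh.2; ring.
by move=> a x b y; rewrite !Hp mulrC (Z2_skew HZ (b * a) y); ring.
Qed.

Lemma part1 (phi : A -> k -> k -> K) : Z2_lift brk phi -> exists h, is_fphi t phi h.
Proof.
move=> HZ.
suff [h [Hh Hp]] : exists h : g -> g -> K, bilin_form h /\
    forall a x b y, h (t a x) (t b y) = phi (a * b) x y by exists h.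
apply: (mk_form Ht (B := fun a x b y => phi (a * b) x y)).
- by move=> c a a' x b y; rewrite mulrDl -scalerAl; apply: HZ.1.
- by move=> c a x x' b y; apply: (Z2_bf HZ _).1.
- by move=> c a x b b' y; rewrite mulrDr -scalerAr; apply: HZ.1.
- by move=> c a x b y y'; apply: (Z2_bf HZ _).2.
Qed.

Lemma Phi_bf (om : Q -> Q -> K) (h : g -> g -> K) : alt_form om -> bilin_form h -> bilin_form (Phi_rep q om h).
Proof.
move=> [[Ho1 Ho2] _] [Hh1 Hh2]; split=> c u1 u2 v; rewrite /Phi_rep Hq.1.
  by rewrite Ho1 Hh1; ring.
by rewrite Ho2 Hh2; ring.
Qed.

Lemma part2 (om : Q -> Q -> K) (phi : A -> k -> k -> K) h : alt13 t q om -> Z2_lift brk phi -> is_fphi t phi h ->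
  cocycle2 brg (Phi_rep q om h).
Proof.
move=> [Hom _] HZ [Hh Hp].
split; first split.
- exact: Phi_bf.
- move=> u; rewrite /Phi_rep Hom.2 (skew_alt two_unit (fphi_skew HZ (conj Hh Hp))) addr0.
  by [].
move=> u v w; rewrite /Phi_rep !qbr !(bf01 Hom.1) !add0r.
apply: (cocycle_pure Hh) => a x b y c z; rewrite !Hbrg !Hp.
have -> : b * c * a = a * b * c by rewrite mulrC mulrA.
have -> : c * a * b = a * b * c by rewrite -mulrA mulrC.
exact: (HZ.2 _).2.
Qed.


Lemma part3 (phi phi' : A -> k -> k -> K) h h' : Z2_lift brk phi -> Z2_lift brk phi' ->
  (forall a, coboundary2 brk (fun x y => phi a x y - phi' a x y)) ->
  is_fphi t phi h -> is_fphi t phi' h' -> coboundary2 brg (fun u v => h u v - h' u v).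
Proof.
move=> HZ HZ' Hcb [Hh Hp] [Hh' Hp'].
pose lf a := proj1_sig (constructive_indefinite_description _ (Hcb a)).
have lfP a : is_lin (W := K^o) (lf a) /\ forall x y, phi a x y - phi' a x y = - lf a (brk x y).
  by rewrite /lf; case: constructive_indefinite_description.
pose S w := forall (c : K) a1 a2, lf (c *: a1 + a2) w = c * lf a1 w + lf a2 w.
have [pi [Hpi [Spi pis]]] : exists pi : k -> k, is_lin pi /\ (forall v, S (pi v)) /\ (forall s, S s -> pi s = s).
  apply: proj_exists.
  - by move=> c a1 a2; rewrite !(lin0 (lfP _).1); ring.
  - by move=> c u v Su Sv e a1 a2; rewrite !(linK (lfP _).1) Su Sv; ring.
have Sbr x y : S (brk x y).
  have E a : lf a (brk x y) = phi' a x y - phi a x y.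
    by rewrite -[LHS]opprK -(lfP a).2 opprB.
  by move=> c a1 a2; rewrite !E HZ.1 HZ'.1; ring.
have [|L [HL [HLt _]]] := Ht.2 (K^o) (fun a z => lf a (pi z)).
  split=> [a|z].
    exact: lin_comp Hpi (lfP a).1.
  by move=> c a1 a2; apply: Spi.
exists L; split; first exact: HL.
apply: (bilin_ext Ht (f1 := fun u v => h u v - h' u v) (f2 := fun u v => - L (brg u v))).
- by split=> c u1 u2 v; rewrite ?Hh.1 ?Hh'.1 ?Hh.2 ?Hh'.2; ring.
- split=> c u1 u2 v.
    by have -> := Hbrg_bil.2 v c u1 u2; rewrite (linK HL); ring.
  by rewrite (Hbrg_bil.1 u1) (linK HL); ring.
- move=> a x b y; rewrite Hp Hp' Hbrg HLt /= pis //.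
  exact: (lfP _).2.
Qed.

Lemma part4 (c : K) (om1 om2 : Q -> Q -> K) (phi1 phi2 : A -> k -> k -> K) h1 h2 h :
  alt13 t q om1 -> alt13 t q om2 -> Z2_lift brk phi1 -> Z2_lift brk phi2 ->
  is_fphi t phi1 h1 -> is_fphi t phi2 h2 ->
  is_fphi t (fun a x y => c * phi1 a x y + phi2 a x y) h ->
  coboundary2 brg (fun u v =>
    Phi_rep q (fun w z => c * om1 w z + om2 w z) h u v
    - (c * Phi_rep q om1 h1 u v + Phi_rep q om2 h2 u v)).
Proof.
move=> _ _ _ _ [Hh1 Hp1] [Hh2 Hp2] [Hh Hp].
exists (fun _ => 0); split; first exact: lin_zero.
move=> u v.
have E : h u v = c * h1 u v + h2 u v.
  apply: (bilin_ext Ht (f1 := h) (f2 := fun u v => c * h1 u v + h2 u v)) => //.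
    by split=> e u1 u2 w; rewrite ?Hh1.1 ?Hh2.1 ?Hh1.2 ?Hh2.2; ring.
  by move=> a x b y; rewrite Hp Hp1 Hp2.
rewrite /Phi_rep E /=; ring.
Qed.

Lemma part5 (om : Q -> Q -> K) (phi : A -> k -> k -> K) h :
  alt13 t q om -> Z2_lift brk phi -> is_fphi t phi h ->
  coboundary2 brg (Phi_rep q om h) ->
  (forall w z, om w z = 0) /\ (forall a, coboundary2 brk (phi a)).
Proof.
move=> [Hom H13] HZ [Hh Hp] [l [Hl Hlc]].
have phiE c x y : phi c x y = - l (t c (brk x y)).
  have e1 := Hlc (t c x) (t 1 y); have e2 := Hlc (t 1 x) (t c y); have e3 := H13 c x y.
  rewrite /Phi_rep Hp Hbrg mulr1 in e1; rewrite /Phi_rep Hp Hbrg mul1r in e2.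
  apply/eqP; rewrite -subr_eq0 opprK; apply/eqP; apply: (half0 two_unit).
  transitivity ((om (q (t c x)) (q (t 1 y)) + phi c x y + l (t c (brk x y)))
    + (om (q (t 1 x)) (q (t c y)) + phi c x y + l (t c (brk x y)))
    - (om (q (t c x)) (q (t 1 y)) + om (q (t 1 x)) (q (t c y)))); first ring.
  by rewrite e3 e1 e2; ring.
split.
- move=> w z; have [u <-] := Hq.2.1 w; have [v <-] := Hq.2.1 z.
  apply: (bilin_ext Ht (f1 := fun u v => om (q u) (q v)) (f2 := fun _ _ => 0)) u v.
  + exact: bf_linK Hom.1 Hq.1.
  + by split=> *; ring.
  + move=> a x b y; have := Hlc (t a x) (t b y); rewrite /Phi_rep Hp Hbrg phiE => E.
    by apply: (addIr (- l (t (a * b) (brk x y)))); rewrite E add0r.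
- move=> a; exists (fun z => l (t a z)); split; first exact: lin_comp (tlin2 Ht a) Hl.
  by move=> x y; rewrite phiE.
Qed.

Lemma tl1 c a a' x : t (c *: a + a') x = c *: t a x + t a' x.
Proof. exact: (tlin1 Ht x c a a'). Qed.
Lemma tl2 c a x x' : t a (c *: x + x') = c *: t a x + t a x'.
Proof. exact: (tlin2 Ht a c x x'). Qed.

Lemma part6a (f : g -> g -> K) (om : Q -> Q -> K) (phi : A -> k -> k -> K) h :
  alt13 t q om -> Z2_lift brk phi -> is_fphi t phi h ->
  coboundary2 brg (fun u v => f u v - Phi_rep q om h u v) ->
  exists f0, cocycle2 brg f0 /\ f1p1_vanishes t brk f0 /\
    coboundary2 brg (fun u v => f u v - f0 u v).
Proof.
move=> H13 HZ Hf Hcb.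
have [Hom _] := H13; have [Hh Hp] := Hf.
exists (Phi_rep q om h); split; first exact: (part2 H13 HZ Hf).
split; last exact: Hcb.
pose F a x b y := om (q (t a x)) (q (t b y)).
have Fsk a x b y : F a y b x = - F b x a y by rewrite /F (alt_skew Hom).
have [h1 [Hh1 Hp1]] : exists h1 : g -> g -> K, bilin_form h1 /\
    forall a x b y, h1 (t a x) (t b y) = (2%:R : K)^-1 * (F a x b y - F b x a y).
  apply: (mk_form Ht (B := fun a x b y => (2%:R : K)^-1 * (F a x b y - F b x a y))).
  - by move=> *; rewrite /F !tl1 !Hq.1 ?Hom.1.1 ?Hom.1.2; ring.
  - by move=> *; rewrite /F !tl2 !Hq.1 ?Hom.1.1 ?Hom.1.2; ring.
  - by move=> *; rewrite /F !tl1 !Hq.1 ?Hom.1.1 ?Hom.1.2; ring.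
  - by move=> *; rewrite /F !tl2 !Hq.1 ?Hom.1.1 ?Hom.1.2; ring.
have HP := Phi_bf Hom Hh.
have PhiE a x b y : Phi_rep q om h (t a x) (t b y) = F a x b y + phi (a * b) x y.
  by rewrite /Phi_rep Hp.
exists h1, (fun u v => Phi_rep q om h u v - h1 u v).
split; first exact: Hh1.
split.
  by split=> c u1 u2 v; rewrite ?HP.1 ?HP.2 ?Hh1.1 ?Hh1.2; ring.
split; first by move=> u v; ring.
split; first by move=> a b x y; rewrite !Hp1; ring.
split; first by move=> a b x y; rewrite !Hp1 (Fsk a x b y) (Fsk b x a y); ring.
split.
  move=> a b x y; rewrite !PhiE !Hp1 [b * a]mulrC; field.
  exact: two_unit.
split.
  move=> a b x y; rewrite !PhiE !Hp1 (Fsk a x b y) (Fsk b x a y) (Z2_skew HZ _ y x); field.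
  exact: two_unit.
apply: gprime_zero => // u b y Dy.
apply: (eq_pure Ht ((formK' Hh1).1 (t b y)) (lin_zero (V:=g) K^o)) => a x.
by rewrite Hp1 /F (q_t b Dy) (q_t a Dy) !(bf02 Hom.1); ring.
Qed.

Lemma part6b (f f0 : g -> g -> K) : cocycle2 brg f0 -> f1p1_vanishes t brk f0 ->
  coboundary2 brg (fun u v => f u v - f0 u v) ->
  exists om phi h, alt13 t q om /\ Z2_lift brk phi /\ is_fphi t phi h /\
    coboundary2 brg (fun u v => f u v - Phi_rep q om h u v).
Proof.
move=> [[Hf0b Hf0a] Hf0c] [h1 [h2 [Hh1 [Hh2 [Hsum [A1 [S1 [S2 [A2 V1]]]]]]]]] [l [Hl Hlc]].
have h1sk u v : h1 u v = - h1 v u.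
  apply: (bilin_ext Ht (f1 := h1) (f2 := fun u v => - h1 v u)) => //.
    by split=> c u1 u2 w; rewrite ?Hh1.1 ?Hh1.2; ring.
  by move=> a x b y; rewrite (A1 a b x y) (S1 b a x y).
have Z1 c x y w : h1 (t c (brk x y)) w = 0.
  by rewrite h1sk V1 ?oppr0 //; apply: gprime_t; apply: derived_br.
pose Hv a b x y := h2 (t a x) (t b y).
have Ip a b x y z : Hv (a * b) 1 (brk x y) z + Hv a b (brk y z) x + Hv a b (brk z x) y = 0.
  have := Hf0c (t a x) (t b y) (t 1 z).
  by rewrite !Hbrg mulr1 mul1r !Hsum !Z1 !add0r (S2 b a).
pose psi a x y := h2 (t a x) (t 1 y).
have HZ : Z2_lift brk psi.
  split.
    by move=> c a b x y; rewrite /psi tl1 Hh2.1.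
  move=> a; split; first split.
  - by split=> c u1 u2 v; rewrite /psi tl2 ?Hh2.1 ?Hh2.2.
  - apply: (skew_alt two_unit) => x y; exact: A2.
  - move=> x y z; have := Ip a 1 x y z.
    by rewrite mulr1.
have [h [Hh Hp]] := part1 HZ.
have QP a b u v w : Hv a b (brk u v) w = Hv (a * b) 1 (brk u v) w.
  have e1 := Ip a b u v w; have e2 := Ip a b v w u; have e3 := Ip a b w u v.
  have e4 := Ip (a * b) 1 u v w; rewrite mulr1 in e4.
  have HS : Hv a b (brk u v) w + Hv a b (brk v w) u + Hv a b (brk w u) v = 0.
    apply: (half0 two_unit).
    transitivity ((Hv (a * b) 1 (brk u v) w + Hv a b (brk v w) u + Hv a b (brk w u) v)
      + (Hv (a * b) 1 (brk v w) u + Hv a b (brk w u) v + Hv a b (brk u v) w)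
      + (Hv (a * b) 1 (brk w u) v + Hv a b (brk u v) w + Hv a b (brk v w) u)
      - (Hv (a * b) 1 (brk u v) w + Hv (a * b) 1 (brk v w) u + Hv (a * b) 1 (brk w u) v));
      first ring.
    by rewrite e1 e2 e3 e4; ring.
  transitivity ((Hv a b (brk u v) w + Hv a b (brk v w) u + Hv a b (brk w u) v)
    - (Hv (a * b) 1 (brk u v) w + Hv a b (brk v w) u + Hv a b (brk w u) v)
    + Hv (a * b) 1 (brk u v) w); first ring.
  by rewrite HS e1; ring.
have Dkey a b x y z : h2 (t a x) (t b (brk y z)) = psi (a * b) x (brk y z).
  rewrite /psi (A2 a b x) (A2 (a * b) 1 x); congr (- _); exact: QP.
pose G u v := f0 u v - h u v.
have Gb : bilin_form G.
  by split=> c u1 u2 v; rewrite /G ?Hf0b.1 ?Hf0b.2 ?Hh.1 ?Hh.2; ring.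
have Gsk u v : G u v = - G v u.
  rewrite /G (alt_skew (conj Hf0b Hf0a) u v) (fphi_skew HZ (conj Hh Hp) u v); ring.
have Gv2 u v : gprime t brk v -> G u v = 0.
  move=> Hv'; apply: (gprime_zero Gb) Hv' => u' b w Dw.
  apply: (eq_pure Ht ((formK' Gb).1 (t b w)) (lin_zero (V:=g) K^o)) => a x.
  rewrite /G Hsum Hp V1; last exact: gprime_t.
  rewrite add0r; apply/eqP; rewrite subr_eq0; apply/eqP.
  apply: (derived_ext (L1 := fun w => h2 (t a x) (t b w))
     (L2 := fun w => psi (a * b) x w)) Dw.
  - exact: lin_comp (tlin2 Ht b) ((formK' Hh2).2 _).
  - exact: lin_comp (tlin2 Ht 1) ((formK' Hh2).2 _).
  - by move=> y z; apply: Dkey.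
have Gv1 u v : gprime t brk u -> G u v = 0.
  by move=> Hu; rewrite Gsk Gv2 ?oppr0.
have Gq1 u1 u2 v : q u1 = q u2 -> G u1 v = G u2 v.
  move=> E; have -> : u1 = u2 + (u1 - u2) by rewrite addrC subrK.
  rewrite (bfD1 Gb) [G (u1 - u2) v]Gv1 ?addr0 //; apply: (Hq.2.2 _).1.
  by rewrite (linB Hq.1) E subrr.
have Gq2 u v1 v2 : q v1 = q v2 -> G u v1 = G u v2.
  by move=> E; rewrite Gsk (Gq1 _ _ _ E) -Gsk.
pose s w := proj1_sig (constructive_indefinite_description _ (Hq.2.1 w)).
have sP w : q (s w) = w.
  by rewrite /s; case: constructive_indefinite_description.
pose om w z := G (s w) (s z).
have omq u v : om (q u) (q v) = G u v.
  by rewrite /om (Gq1 _ u _ (sP _)) (Gq2 _ _ v (sP _)).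
exists om, psi, h; split; last split=> //; last split=> //.
  split; first split; first split.
  - move=> c w1 w2 z; rewrite /om (Gq1 _ (c *: s w1 + s w2)); first by rewrite Gb.1.
    by rewrite Hq.1 !sP.
  - move=> c w z1 z2; rewrite /om (Gq2 _ _ (c *: s z1 + s z2)); first by rewrite Gb.2.
    by rewrite Hq.1 !sP.
  - by move=> w; rewrite /om; apply: (skew_alt two_unit).
  move=> a x y; rewrite !omq /G !Hsum !Hp mulr1 mul1r (A1 1 a x y) (S2 1 a x y) /psi.
  ring.
exists l; split=> // u v.
rewrite /Phi_rep omq /G -Hlc; ring.
Qed.

End Main.


Theorem lemma4p1
  (K : fieldType) (two_unit : (2%:R : K) != 0)
  (A : comAlgType K)
  (k : lmodType K) (brk : k -> k -> k) (Hk : is_lie_bracket brk)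
  (g : lmodType K) (t : A -> k -> g) (Ht : is_tensor t)
  (brg : g -> g -> g) (Hbrg_bil : is_bilin brg)
  (Hbrg : forall a x b y, brg (t a x) (t b y) = t (a * b) (brk x y))
  (Q : lmodType K) (q : g -> Q) (Hq : is_quotient_map q (gprime t brk)) :
  (* well-defined: f_phi exists, Phi(om,phi) is a 2-cocycle, independent of the lift *)
  (forall phi, Z2_lift brk phi -> exists h, is_fphi t phi h) /\
  (forall om phi h, alt13 t q om -> Z2_lift brk phi -> is_fphi t phi h ->
     cocycle2 brg (Phi_rep q om h)) /\
  (forall phi phi' h h', Z2_lift brk phi -> Z2_lift brk phi' ->
     (forall a, coboundary2 brk (fun x y => phi a x y - phi' a x y)) ->
     is_fphi t phi h -> is_fphi t phi' h' ->
     coboundary2 brg (fun u v => h u v - h' u v)) /\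
  (* linear *)
  (forall (c : K) om1 om2 phi1 phi2 h1 h2 h,
     alt13 t q om1 -> alt13 t q om2 -> Z2_lift brk phi1 -> Z2_lift brk phi2 ->
     is_fphi t phi1 h1 -> is_fphi t phi2 h2 ->
     is_fphi t (fun a x y => c * phi1 a x y + phi2 a x y) h ->
     coboundary2 brg (fun u v =>
       Phi_rep q (fun w z => c * om1 w z + om2 w z) h u v
       - (c * Phi_rep q om1 h1 u v + Phi_rep q om2 h2 u v))) /\
  (* injective *)
  (forall om phi h, alt13 t q om -> Z2_lift brk phi -> is_fphi t phi h ->
     coboundary2 brg (Phi_rep q om h) ->
     (forall w z, om w z = 0) /\ (forall a, coboundary2 brk (phi a))) /\
  (* image *)
  (forall f, cocycle2 brg f ->
     ((exists om phi h, alt13 t q om /\ Z2_lift brk phi /\ is_fphi t phi h /\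
         coboundary2 brg (fun u v => f u v - Phi_rep q om h u v)) <->
      (exists f0, cocycle2 brg f0 /\ f1p1_vanishes t brk f0 /\
         coboundary2 brg (fun u v => f u v - f0 u v)))).
Proof.
split; first by move=> phi HZ; exact: (part1 Ht HZ).
split; first by move=> om phi h H13 HZ Hf; exact: (part2 two_unit Ht Hbrg_bil Hbrg Hq H13 HZ Hf).
split; first by move=> phi phi' h h' HZ HZ' Hcb Hf Hf'; exact: (part3 Ht Hbrg_bil Hbrg HZ HZ' Hcb Hf Hf').
split; first by move=> c om1 om2 phi1 phi2 h1 h2 h H1 H2 HZ1 HZ2 Hf1 Hf2 Hf; exact: (part4 brg Ht H1 H2 HZ1 HZ2 Hf1 Hf2 Hf).
split; first by move=> om phi h H13 HZ Hf Hcb; exact: (part5 two_unit Ht Hbrg Hq H13 HZ Hf Hcb).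
move=> f Hfc; split.
  move=> [om [phi [h [H13 [HZ [Hf Hcb]]]]]].
  exact: (part6a two_unit Ht Hbrg_bil Hbrg Hq H13 HZ Hf Hcb).
move=> [f0 [Hc [Hv Hcb]]].
exact: (part6b two_unit Ht Hbrg Hq Hc Hv Hcb).
Qed.
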